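(* Let $S=\{s_1<\dots<s_{k_1}\}$ and $T=\{t_1<\dots<t_{k_2}\}$ be nonempty subsets of $\{1,\dots,n-1\}$ with $\max S+\min T\le n$ and $\min S+\max T\le n$, and let $D$ be the digraph of $T_n\langle S;T\rangle$. Let $v$ be a vertex of $D$ and let $a_2,\dots,a_{k_1},b_2,\dots,b_{k_2}$ be nonnegative integers. Then: (a) there is a directed walk $W$ in $D$ starting from $v$, of length $\ell$, containing exactly $a_i$ $s_i$-arcs and exactly $b_j$ $t_j$-arcs for each $2\le i\le k_1$ and $2\le j\le k_2$, where $$\ell\le\Big(\sum_{i=2}^{k_1}a_i+\sum_{j=2}^{k_2}b_j\Big)\Big(\max\Big\{\Big\lceil\tfrac{t_{k_2}}{s_1}\Big\rceil,\Big\lceil\tfrac{s_{k_1}}{t_1}\Big\rceil\Big\}+1\Big);$$ (b) for such a walk $W$, let $a_1$ and $b_1$ be the numbers of $s_1$-arcs and $t_1$-arcs in $W$. If integers $a\ge a_1$ and $b\ge b_1$ satisfy $$1\le v+as_1+\sum_{i=2}^{k_1}a_is_i-bt_1-\sum_{j=2}^{k_2}b_jt_j\le n,$$ then there is a directed walk in $D$ starting from $v$ containing exactly $a$ $s_1$-arcs, exactly $b$ $t_1$-arcs, and exactly $a_i$ $s_i$-arcs and $b_j$ $t_j$-arcs for all $2\le i\le k_1$, $2\le j\le k_2$.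
   Context: $T_n\langle S;T\rangle$ is the $n\times n$ $(0,1)$-matrix whose $(i,j)$-entry is $1$ iff $j-i\in S$ or $i-j\in T$; its digraph $D$ has vertex set $[n]$ and arc $(i,j)$ iff that entry is $1$. An arc $u\to v$ of $D$ is an $s_i$-arc if $v-u=s_i$, and a $t_j$-arc if $u-v=t_j$. *)

(* Defs.v *)
From mathcomp Require Import all_boot all_order all_algebra.
Set Implicit Arguments. Unset Strict Implicit. Unset Printing Implicit Defensive.

(* S and T are given as strictly increasing sequences
   S = [:: s_1; ...; s_k1] (so s_i = nth 0 S (i-1), 0-based in Rocq). *)
Definition Darc (n : nat) (S T : seq nat) (x y : nat) : bool :=
  [&& 1 <= x <= n, 1 <= y <= n &
      ((x < y) && (y - x \in S)) || ((y < x) && (x - y \in T))].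

(* A directed walk from v is the list w of vertices visited after v;
   its length is size w. *)
Definition is_walk (n : nat) (S T : seq nat) (v : nat) (w : seq nat) : bool :=
  (1 <= v <= n) && path (Darc n S T) v w.

Definition num_sarcs (s v : nat) (w : seq nat) : nat :=
  count (fun p : nat * nat => p.2 == p.1 + s) (zip (v :: w) w).

Definition num_tarcs (t v : nat) (w : seq nat) : nat :=
  count (fun p : nat * nat => p.1 == p.2 + t) (zip (v :: w) w).

Definition ceildiv (m d : nat) : nat := (m + d.-1) %/ d.

(* Main.v *)
Require Import Defs.
From mathcomp Require Import all_boot all_order all_algebra.
From mathcomp Require Import zify.
Import GRing.Theory Num.Theory.
From mathcomp Require Import ring.

Lemma nsE s v x w : num_sarcs s v (x :: w) = (x == v + s) + num_sarcs s x w.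
Proof. by []. Qed.
Lemma ntE t v x w : num_tarcs t v (x :: w) = (v == x + t) + num_tarcs t x w.
Proof. by []. Qed.
Lemma ns_nil s v : num_sarcs s v [::] = 0. Proof. by []. Qed.
Lemma nt_nil t v : num_tarcs t v [::] = 0. Proof. by []. Qed.

Lemma ns_cat s v w1 w2 :
  num_sarcs s v (w1 ++ w2) = num_sarcs s v w1 + num_sarcs s (last v w1) w2.
Proof. elim: w1 v => [|x w1 IH] v; first by rewrite ns_nil. by rewrite cat_cons !nsE IH addnA. Qed.
Lemma nt_cat t v w1 w2 :
  num_tarcs t v (w1 ++ w2) = num_tarcs t v w1 + num_tarcs t (last v w1) w2.
Proof. elim: w1 v => [|x w1 IH] v; first by rewrite nt_nil. by rewrite cat_cons !ntE IH addnA. Qed.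

Lemma ns_up s d x w : num_sarcs s x (x + d :: w) = (d == s) + num_sarcs s (x + d) w.
Proof. by rewrite nsE eqn_add2l eq_sym. Qed.
Lemma nt_up t d x w : 0 < d -> num_tarcs t x (x + d :: w) = num_tarcs t (x + d) w.
Proof. move=> d0; rewrite ntE; have -> : (x == x + d + t) = false by apply/negbTE/eqP; lia. by []. Qed.
Lemma ns_down s d x w : 0 < d -> d <= x -> num_sarcs s x (x - d :: w) = num_sarcs s (x - d) w.
Proof. move=> d0 dx; rewrite nsE; have -> : (x - d == x + s) = false by apply/negbTE/eqP; lia. by []. Qed.
Lemma nt_down t d x w : d <= x -> num_tarcs t x (x - d :: w) = (d == t) + num_tarcs t (x - d) w.
Proof. move=> dx; rewrite ntE; have -> : (x == x - d + t) = (d == t). by apply/idP/idP => /eqP h; apply/eqP; lia. by []. Qed.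

Lemma darc_up n S T x d : 1 <= x -> x + d <= n -> 0 < d -> d \in S -> Darc n S T x (x + d).
Proof. move=> *; rewrite /Darc; apply/and3P; split; try lia. by apply/orP; left; rewrite addKn; apply/andP; split => //; lia. Qed.
Lemma darc_down n S T x d : x <= n -> d < x -> 0 < d -> d \in T -> Darc n S T x (x - d).
Proof. move=> *; rewrite /Darc; apply/and3P; split; try lia. apply/orP; right; rewrite subKn; try lia. by apply/andP; split => //; lia. Qed.

Lemma ceilD_le m d : 0 < d -> m <= ceildiv m d * d.
Proof. case: d => [//|d] _; rewrite /ceildiv /=.
have := divn_eq (m + d) d.+1; have := ltn_pmod (m + d) (ltn0Sn d). lia. Qed.

Lemma sum_pos m k f : 0 < \sum_(m <= i < k) f i -> exists2 i, m <= i < k & 0 < f i.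
Proof.
move=> hpos; case: (boolP (has (fun i => 0 < f i) (index_iota m k))) => [/hasP[i]|/hasPn H].
  by rewrite mem_index_iota => ??; exists i.
move: hpos; rewrite big1_seq // => i /andP[_ /H]; rewrite lt0n negbK => /eqP //.
Qed.

Lemma sum_zero m k f i : \sum_(m <= j < k) f j = 0 -> m <= i < k -> f i = 0.
Proof.
move=> h hi; move: h; rewrite (bigD1_seq i) ?mem_index_iota ?iota_uniq //=.
by move/eqP; rewrite addn_eq0 => /andP[/eqP].
Qed.

Lemma sum_upd m k (f g : nat -> nat) i : m <= i < k -> f i = (g i).+1 ->
  (forall j, j != i -> f j = g j) ->
  \sum_(m <= j < k) f j = (\sum_(m <= j < k) g j).+1.
Proof.
move=> hi fi fg.
rewrite (bigD1_seq i) ?mem_index_iota ?iota_uniq //=.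
rewrite [in RHS](bigD1_seq i) ?mem_index_iota ?iota_uniq //= fi addSn.
by rewrite (eq_bigr g) // => j /fg.
Qed.

Lemma down_walk n S T d t1 : t1 \in T -> 0 < t1 -> d + t1 <= n ->
  forall k x, 1 <= x <= n -> x + d <= n + k * t1 ->
  exists p, [/\ path (Darc n S T) x p, size p <= k,
     (1 <= last x p) && (last x p + d <= n),
     forall s, num_sarcs s x p = 0 &
     forall t, t != t1 -> num_tarcs t x p = 0].
Proof.
move=> t1T t1p dt1n; elim=> [|k IH] x /andP[x1 xn] xd.
  by exists [::]; split=> //=; apply/andP; split; lia.
case: (leqP (x + d) n) => xdn; first by exists [::]; split=> //=; apply/andP; split; lia.
have h1 : 1 <= x - t1 <= n by lia.
have h2 : x - t1 + d <= n + k * t1 by rewrite mulSn in xd; lia.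
have [p [pp ps /andP[pl1 pld] pns pnt]] := IH _ h1 h2.
exists (x - t1 :: p); split=> //=.
all: try by apply/andP.
- by rewrite pp andbT darc_down //; lia.
- by move=> s; rewrite ns_down //; lia.
- by move=> t tt; rewrite nt_down ?pnt //; [rewrite eq_sym (negbTE tt) | lia].
Qed.

Lemma up_walk n S T d s1 : s1 \in S -> 0 < s1 -> s1 + d <= n ->
  forall k x, 1 <= x <= n -> d + 1 <= x + k * s1 ->
  exists p, [/\ path (Darc n S T) x p, size p <= k,
     (last x p <= n) && (d < last x p),
     forall t, num_tarcs t x p = 0 &
     forall s, s != s1 -> num_sarcs s x p = 0].
Proof.
move=> s1S s1p dt1n; elim=> [|k IH] x /andP[x1 xn] xd.
  by exists [::]; split=> //=; apply/andP; split; lia.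
case: (ltnP d x) => xdn; first by exists [::]; split=> //=; apply/andP; split; lia.
have h1 : 1 <= x + s1 <= n by lia.
have h2 : d + 1 <= x + s1 + k * s1 by rewrite mulSn in xd; lia.
have [p [pp ps /andP[pl1 pld] pns pnt]] := IH _ h1 h2.
exists (x + s1 :: p); split=> //=.
all: try by apply/andP.
- by rewrite pp andbT darc_up //; lia.
- by move=> t; rewrite nt_up //; lia.
- by move=> s ss; rewrite ns_up ?pnt // eq_sym (negbTE ss).
Qed.

Lemma walk_b n S T s1 t1 : s1 \in S -> t1 \in T -> 0 < s1 -> 0 < t1 -> s1 + t1 <= n ->
  forall K p q x, p + q <= K -> 1 <= x <= n -> 1 + q * t1 <= x + p * s1 <= n + q * t1 ->
  exists w, [/\ path (Darc n S T) x w, num_sarcs s1 x w = p, num_tarcs t1 x w = q,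
     forall s, s != s1 -> num_sarcs s x w = 0 & forall t, t != t1 -> num_tarcs t x w = 0].
Proof.
move=> s1S t1T s1p t1p st; elim=> [|K IH] p q x hK hx hc.
  have [-> ->] : p = 0 /\ q = 0 by lia.
  by exists [::].
have up : 0 < p -> x + s1 <= n -> exists w, [/\ path (Darc n S T) x w, num_sarcs s1 x w = p, num_tarcs t1 x w = q,
     forall s, s != s1 -> num_sarcs s x w = 0 & forall t, t != t1 -> num_tarcs t x w = 0].
  move=> p0 xs.
  have [|||w [pw w1 w2 w3 w4]] := IH p.-1 q (x + s1).
  - lia.
  - lia.
  - by move: hc; case: p p0 {hK} => // p _; rewrite mulSn /=; lia.
  exists (x + s1 :: w); split => /=.
  - by rewrite pw andbT darc_up //; lia.
  - by rewrite ns_up eqxx w1 add1n prednK.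
  - by rewrite nt_up.
  - by move=> s ss; rewrite ns_up w3 // eq_sym (negbTE ss).
  - by move=> t tt; rewrite nt_up // w4.
have down : 0 < q -> t1 < x -> exists w, [/\ path (Darc n S T) x w, num_sarcs s1 x w = p, num_tarcs t1 x w = q,
     forall s, s != s1 -> num_sarcs s x w = 0 & forall t, t != t1 -> num_tarcs t x w = 0].
  move=> q0 xs.
  have [|||w [pw w1 w2 w3 w4]] := IH p q.-1 (x - t1).
  - lia.
  - lia.
  - by move: hc; case: q q0 {hK up} => // q _; rewrite mulSn /=; lia.
  exists (x - t1 :: w); split => /=.
  - by rewrite pw andbT darc_down //; lia.
  - by rewrite ns_down //; lia.
  - by rewrite nt_down ?eqxx ?w2 ?add1n ?prednK //; lia.
  - by move=> s ss; rewrite ns_down ?w3 //; lia.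
  - by move=> t tt; rewrite nt_down ?w4 1?eq_sym ?(negbTE tt) //; lia.
move: up down hc; case: p {hK} => [|p]; case: q => [|q] up down hc.
- by exists [::].
- by apply: down => //; rewrite mulSn in hc; lia.
- by apply: up => //; rewrite mulSn in hc; lia.
- case: (leqP (x + s1) n) => h; first by apply: up.
  by apply: down => //; lia.
Qed.

Lemma disp n S T v w : uniq S -> uniq T -> path (Darc n S T) v w ->
  ((last v w)%:Z = v%:Z + \sum_(s <- S) (num_sarcs s v w * s)%:Z
                  - \sum_(t <- T) (num_tarcs t v w * t)%:Z)%R.
Proof.
move=> uS uT; elim: w v => [|x w IH] v /=.
  move=> _; rewrite !big1 ?subr0 ?addr0 // => ? _; by rewrite ?ns_nil ?nt_nil.
move=> /andP[dx pw]; rewrite (IH x pw).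
under eq_bigr do rewrite nsE mulnDl PoszD.
under [X in _ = (_ - X)%R]eq_bigr do rewrite ntE mulnDl PoszD.
rewrite !big_split /=.
move: dx; rewrite /Darc => /and3P[_ _ /orP[/andP[vx dS]|/andP[xv dT]]].
- have [d xd] : exists d, x = v + d by exists (x - v); lia.
  subst x; rewrite addKn in dS.
  have -> : (\sum_(s <- S) ((v + d == v + s) * s)%:Z = d%:Z)%R.
    under eq_bigr do rewrite eqn_add2l.
    rewrite (bigD1_seq d) //= eqxx mul1n big1 ?addr0 // => s sd.
    by rewrite eq_sym (negbTE sd).
  have -> : (\sum_(t <- T) ((v == v + d + t) * t)%:Z = 0)%R.
    rewrite big1 // => t _.
    have -> : (v == v + d + t) = false by apply/negbTE/eqP; lia.
    by [].
  rewrite PoszD add0r; ring.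
- have [d xd] : exists d, v = x + d by exists (v - x); lia.
  subst v; rewrite addKn in dT.
  have -> : (\sum_(t <- T) ((x + d == x + t) * t)%:Z = d%:Z)%R.
    under eq_bigr do rewrite eqn_add2l.
    rewrite (bigD1_seq d) //= eqxx mul1n big1 ?addr0 // => s sd.
    by rewrite eq_sym (negbTE sd).
  have -> : (\sum_(s <- S) ((x == x + d + s) * s)%:Z = 0)%R.
    rewrite big1 // => t _.
    have -> : (x == x + d + t) = false by apply/negbTE/eqP; lia.
    by [].
  rewrite PoszD add0r; ring.
Qed.

Lemma part_a n S T K :
  uniq S -> uniq T -> 0 < size S -> 0 < size T ->
  (forall i, i < size S -> 1 <= nth 0 S i <= nth 0 S (size S).-1) ->
  (forall j, j < size T -> 1 <= nth 0 T j <= nth 0 T (size T).-1) ->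
  nth 0 S (size S).-1 + nth 0 T 0 <= n ->
  nth 0 S 0 + nth 0 T (size T).-1 <= n ->
  ceildiv (nth 0 S (size S).-1) (nth 0 T 0) <= K ->
  ceildiv (nth 0 T (size T).-1) (nth 0 S 0) <= K ->
  forall N v (a b : nat -> nat),
  \sum_(1 <= i < size S) a i + \sum_(1 <= j < size T) b j = N -> 1 <= v <= n ->
  exists w, [/\ path (Darc n S T) v w,
     forall i, 1 <= i < size S -> num_sarcs (nth 0 S i) v w = a i,
     forall j, 1 <= j < size T -> num_tarcs (nth 0 T j) v w = b j &
     size w <= N * (K + 1)].
Proof.
move=> uS uT sS sT hS hT h1 h2 k1 k2.
set s1 := nth 0 S 0; set t1 := nth 0 T 0.
set smax := nth 0 S (size S).-1; set tmax := nth 0 T (size T).-1.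
have s1S : s1 \in S by apply: mem_nth.
have t1T : t1 \in T by apply: mem_nth.
have s1p : 0 < s1 by have := hS 0 sS; rewrite -/s1; lia.
have t1p : 0 < t1 by have := hT 0 sT; rewrite -/t1; lia.
elim=> [|N IH] v a b hsum hv.
  exists [::]; split => //.
  - by move=> i hi; rewrite ns_nil; apply/esym/(sum_zero 1 (size S) a i _ hi); lia.
  - by move=> j hj; rewrite nt_nil; apply/esym/(sum_zero 1 (size T) b j _ hj); lia.
case: (posnP (\sum_(1 <= i < size S) a i)) => [sa0|saP].
- have [j hj bj] : exists2 j, 1 <= j < size T & 0 < b j by apply: (sum_pos 1 (size T) b); lia.
  set b' := fun k => if k == j then (b j).-1 else b k.
  have hsb : \sum_(1 <= i < size T) b i = (\sum_(1 <= i < size T) b' i).+1.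
    apply: (sum_upd 1 (size T) b b' j hj); first by rewrite /b' eqxx prednK.
    by move=> k /negbTE kj; rewrite /b' kj.
  set d := nth 0 T j.
  have hd : 1 <= d <= tmax by apply: hT; lia.
  have sd : s1 + d <= n by rewrite /s1 /tmax in h2 hd *; lia.
  have hk : d + 1 <= v + ceildiv tmax s1 * s1 by have := ceilD_le tmax s1 s1p; lia.
  have [p [pp ps /andP[pl1 pld] pnt pns]] := up_walk n S T d s1 s1S s1p sd (ceildiv tmax s1) v hv hk.
  set y := last v p - d.
  have [||w [pw wa wb ws]] := IH y a b'.
  + lia.
  + rewrite /y; lia.
  exists (p ++ y :: w); split.
  + rewrite cat_path pp /= pw andbT /y darc_down //; try lia.
    by rewrite /d mem_nth //; lia.
  + move=> i hi; rewrite ns_cat pns ?add0n.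
      by rewrite /y ns_down ?wa //; lia.
    by rewrite /s1 nth_uniq //; lia.
  + move=> k hk'; rewrite nt_cat pnt add0n /y nt_down; last by lia.
    rewrite wb // /b' /d nth_uniq //; try lia.
    by case: (eqVneq k j) => [->|kj]; [rewrite add1n prednK | ].
  + have kk : ceildiv tmax s1 <= K := k2. rewrite size_cat /= mulSn; lia.
- have [j hj bj] : exists2 j, 1 <= j < size S & 0 < a j by apply: (sum_pos 1 (size S) a); lia.
  set a' := fun k => if k == j then (a j).-1 else a k.
  have hsa : \sum_(1 <= i < size S) a i = (\sum_(1 <= i < size S) a' i).+1.
    apply: (sum_upd 1 (size S) a a' j hj); first by rewrite /a' eqxx prednK.
    by move=> k /negbTE kj; rewrite /a' kj.
  set d := nth 0 S j.
  have hd : 1 <= d <= smax by apply: hS; lia.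
  have sd : d + t1 <= n by rewrite /t1 /smax in h1 hd *; lia.
  have hk : v + d <= n + ceildiv smax t1 * t1 by have := ceilD_le smax t1 t1p; lia.
  have [p [pp ps /andP[pl1 pld] pns pnt]] := down_walk n S T d t1 t1T t1p sd (ceildiv smax t1) v hv hk.
  set y := last v p + d.
  have [||w [pw wa wb ws]] := IH y a' b.
  + lia.
  + rewrite /y; lia.
  exists (p ++ y :: w); split.
  + rewrite cat_path pp /= pw andbT /y darc_up //; try lia.
    by rewrite /d mem_nth //; lia.
  + move=> k hk'; rewrite ns_cat pns add0n /y ns_up.
    rewrite wa // /a' /d nth_uniq //; try lia.
    by case: (eqVneq j k) => [<-|kj]; [rewrite add1n prednK | ].
  + move=> i hi; rewrite nt_cat pnt ?add0n.
      by rewrite /y nt_up ?wb //; lia.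
    by rewrite /t1 nth_uniq //; lia.
  + have kk : ceildiv smax t1 <= K := k1. rewrite size_cat /= mulSn; lia.
Qed.

Lemma last_in n S T v w : path (Darc n S T) v w -> 1 <= v <= n -> 1 <= last v w <= n.
Proof.
elim: w v => [|x w IH] v //= /andP[dx pw] _; apply: IH => //.
by move: dx; rewrite /Darc => /and3P[].
Qed.

Theorem theorem3p3 (n : nat) (S T : seq nat) (v : nat) (a b : nat -> nat) :
  S != [::] -> T != [::] ->
  sorted ltn S -> sorted ltn T ->
  all (fun s => 1 <= s <= n.-1) S -> all (fun t => 1 <= t <= n.-1) T ->
  (* max S + min T <= n  and  min S + max T <= n *)
  nth 0 S (size S).-1 + nth 0 T 0 <= n ->
  nth 0 S 0 + nth 0 T (size T).-1 <= n ->
  1 <= v <= n ->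
  (* a i (1 <= i < size S) is the prescribed number of s_(i+1)-arcs,
     b j (1 <= j < size T) is the prescribed number of t_(j+1)-arcs *)
  let good (w : seq nat) :=
    [/\ is_walk n S T v w,
        forall i, 1 <= i < size S -> num_sarcs (nth 0 S i) v w = a i &
        forall j, 1 <= j < size T -> num_tarcs (nth 0 T j) v w = b j] in
  let bound :=
    ((\sum_(1 <= i < size S) a i) + (\sum_(1 <= j < size T) b j)) *
    (maxn (ceildiv (nth 0 T (size T).-1) (nth 0 S 0))
          (ceildiv (nth 0 S (size S).-1) (nth 0 T 0)) + 1) in
  (* (a) *)
  (exists w, good w /\ size w <= bound) /\
  (* (b) *)
  (forall w, good w -> size w <= bound ->
   forall A B : nat,
     num_sarcs (nth 0 S 0) v w <= A ->
     num_tarcs (nth 0 T 0) v w <= B ->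
     (1 <= v%:Z + (A * nth 0 S 0)%:Z + (\sum_(1 <= i < size S) (a i * nth 0 S i)%:Z)
            - (B * nth 0 T 0)%:Z - (\sum_(1 <= j < size T) (b j * nth 0 T j)%:Z)
        <= n%:Z)%R ->
     exists w', [/\ good w',
                    num_sarcs (nth 0 S 0) v w' = A &
                    num_tarcs (nth 0 T 0) v w' = B]).
Proof.
move=> S0 T0 sS sT aS aT h1 h2 hv good bound.
have uS : uniq S := sorted_uniq ltn_trans ltnn sS.
have uT : uniq T := sorted_uniq ltn_trans ltnn sT.
have szS : 0 < size S by rewrite lt0n size_eq0.
have szT : 0 < size T by rewrite lt0n size_eq0.
have hS : forall i, i < size S -> 1 <= nth 0 S i <= nth 0 S (size S).-1.
  move=> i hi; apply/andP; split.
  - by have /andP[] := (all_nthP 0 aS) i hi.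
  - have sS' : sorted leq S := sub_sorted (fun x y => @ltnW x y) sS.
    apply: (sorted_leq_nth leq_trans leqnn 0 sS'); rewrite ?inE; lia.
have hT : forall i, i < size T -> 1 <= nth 0 T i <= nth 0 T (size T).-1.
  move=> i hi; apply/andP; split.
  - by have /andP[] := (all_nthP 0 aT) i hi.
  - have sT' : sorted leq T := sub_sorted (fun x y => @ltnW x y) sT.
    apply: (sorted_leq_nth leq_trans leqnn 0 sT'); rewrite ?inE; lia.
split.
  have [w [pw wa wb ws]] := part_a n S T _ uS uT szS szT hS hT h1 h2 (leq_maxr _ _) (leq_maxl _ _)
     _ v a b erefl hv.
  exists w; split => //; split => //.
  by rewrite /is_walk hv.
move=> w [iw ha hb] _ A B hA hB hint.
move: iw => /andP[_ pw].
have he := disp n S T v w uS uT pw.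
have hel := last_in n S T v w pw hv.
have eS : (\sum_(s <- S) (num_sarcs s v w * s)%:Z =
   (num_sarcs (nth 0 S 0) v w * nth 0 S 0)%:Z + \sum_(1 <= i < size S) (a i * nth 0 S i)%:Z)%R.
  rewrite (big_nth 0) big_ltn //; congr (_ + _)%R; apply: eq_big_nat => i hi.
  by rewrite ha.
have eT : (\sum_(t <- T) (num_tarcs t v w * t)%:Z =
   (num_tarcs (nth 0 T 0) v w * nth 0 T 0)%:Z + \sum_(1 <= i < size T) (b i * nth 0 T i)%:Z)%R.
  rewrite (big_nth 0) big_ltn //; congr (_ + _)%R; apply: eq_big_nat => i hi.
  by rewrite hb.
rewrite eS eT in he.
set s1 := nth 0 S 0 in hA hint he *.
set t1 := nth 0 T 0 in hB hint he *.
set a1 := num_sarcs s1 v w in hA he *.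
set b1 := num_tarcs t1 v w in hB he *.
set X := (\sum_(1 <= i < size S) _)%R in hint he.
set Y := (\sum_(1 <= i < size T) _)%R in hint he.
set e := last v w in he hel.
have s1S : s1 \in S by apply: mem_nth.
have t1T : t1 \in T by apply: mem_nth.
have s1p : 0 < s1 by have /andP[] := hS 0 szS.
have t1p : 0 < t1 by have /andP[] := hT 0 szT.
have st : s1 + t1 <= n.
  apply: leq_trans h1; rewrite leq_add2r.
  by have /andP[] := hS 0 szS.
have m1 : a1 * s1 <= A * s1 by rewrite leq_mul2r hA orbT.
have m2 : b1 * t1 <= B * t1 by rewrite leq_mul2r hB orbT.
have hc : 1 + (B - b1) * t1 <= e + (A - a1) * s1 <= n + (B - b1) * t1.
  rewrite !mulnBl; move: he hint m1 m2 hel.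
  move: (a1 * s1) (A * s1) (b1 * t1) (B * t1) => x1 x2 x3 x4.
  clear; clearbody X Y e; lia.
have [w2 [pw2 c1 c2 c3 c4]] := walk_b n S T s1 t1 s1S t1T s1p t1p st _ (A - a1) (B - b1) e (leqnn _) hel hc.
exists (w ++ w2); split; first split.
- by rewrite /is_walk hv cat_path pw -/e pw2.
- move=> i hi; rewrite ns_cat ha // -/e c3 ?addn0 //.
  by case/andP: hi => hi0 hi1; rewrite /s1 nth_uniq // -lt0n.
- move=> i hi; rewrite nt_cat hb // -/e c4 ?addn0 //.
  by case/andP: hi => hi0 hi1; rewrite /t1 nth_uniq // -lt0n.
- by rewrite ns_cat -/a1 -/e c1 subnKC.
- by rewrite nt_cat -/b1 -/e c2 subnKC.
Qed.
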